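(* Let $\mathcal{X}$ be a connected $n$-premaniplex with base flag $x_0$, let $(\mathcal{Y},\eta)$ be an $(n,m)$-voltage operator with $\mathcal{Y}$ connected and base flag $y_0$, let $N=\operatorname{Stab}_{\mathcal{C}^n}(x_0)$, $L=\operatorname{Stab}_{\mathcal{C}^m}(y_0)$, and $\zeta:L\to\mathcal{C}^n$, $\zeta(\omega)=\eta(W_\omega(y_0))$. If $\mathcal{X}\rtimes_\eta\mathcal{Y}$ is connected and every automorphism of $\mathcal{X}\rtimes_\eta\mathcal{Y}$ is induced by an automorphism of $\mathcal{X}$, then $\operatorname{N}_{\mathcal{C}^m}(\zeta^{-1}(N))\subseteq L$. Conversely, if $(\mathcal{Y},\eta)$ preserves connectivity and $\operatorname{N}_{\mathcal{C}^m}(\zeta^{-1}(N))\subseteq L$, then every automorphism of $\mathcal{X}\rtimes_\eta\mathcal{Y}$ is induced by an automorphism of $\mathcal{X}$.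
   Context: An $n$-premaniplex is an edge-coloured graph (semi-edges and parallel edges allowed) with colours $\{0,\dots,n-1\}$ such that every vertex (flag) is the start of exactly one dart of each colour, and for $|i-j|\ge2$ alternating $i,j$-paths of length 4 are closed; $x^i$ is the $i$-adjacent flag of $x$. $\mathcal{C}^n=\langle r_0,\dots,r_{n-1}\mid r_i^2,\ (r_ir_j)^2\ (|i-j|\ge2)\rangle$ acts on the left on flags by $r_ix=x^i$; automorphisms act on the right. For a flag $y$ of an $m$-premaniplex $\mathcal{Y}$ and $\omega\in\mathcal{C}^m$, $W_\omega(y)$ is the homotopy class of paths from $y$ whose colour sequence $i_1,\dots,i_k$ satisfies $r_{i_k}\cdots r_{i_1}=\omega$; these form the fundamental groupoid $\Pi(\mathcal{Y})$. A voltage assignment $\eta:\Pi(\mathcal{Y})\to\mathcal{C}^n$ satisfies $\eta(W_1W_2)=\eta(W_2)\eta(W_1)$; $(\mathcal{Y},\eta)$ is an $(n,m)$-voltage operator. $\mathcal{X}\rtimes_\eta\mathcal{Y}$ has flags $\mathcal{X}\times\mathcal{Y}$ and $(x,y)^i=(\eta(W_{r_i}(y))x,r_iy)$, $i\in\{0,\dots,m-1\}$. An automorphism $\gamma$ of $\mathcal{X}\rtimes_\eta\mathcal{Y}$ is induced by an automorphism of $\mathcal{X}$ if there is $\alpha\in\operatorname{Aut}(\mathcal{X})$ with $(x,y)\gamma=(x\alpha,y)$ for all $(x,y)$. The operator preserves connectivity if $\mathcal{X}\rtimes_\eta\mathcal{Y}$ is connected whenever $\mathcal{X}$ is. Standing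 convention: $\mathcal{Y}$ has a spanning tree all of whose darts have trivial voltage. *)

(* Defs.v *)
From mathcomp Require Import all_boot.
Set Implicit Arguments. Unset Strict Implicit. Unset Printing Implicit Defensive.

(* The Coxeter group C^n = < r_0..r_{n-1} | r_i^2, (r_i r_j)^2 (|i-j|>=2) >,
   represented by words: the word [:: a1; ...; ak] stands for the product
   r_{a1} r_{a2} ... r_{ak}; equality in C^n is the congruence [coxeq n]
   generated by the defining relations.                                  *)

Definition far (i j : nat) : bool := (i.+2 <= j) || (j.+2 <= i).

Inductive coxeq (n : nat) : seq 'I_n -> seq 'I_n -> Prop :=
| cx_refl w : coxeq w w
| cx_sym w w' : coxeq w w' -> coxeq w' w
| cx_trans w1 w2 w3 : coxeq w1 w2 -> coxeq w2 w3 -> coxeq w1 w3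
| cx_inv (s t : seq 'I_n) (i : 'I_n) : coxeq (s ++ i :: i :: t) (s ++ t)
| cx_comm (s t : seq 'I_n) (i j : 'I_n) :
    far i j -> coxeq (s ++ i :: j :: t) (s ++ j :: i :: t).

(* Inverse of a word (all generators are involutions). *)
Definition winv (n : nat) (w : seq 'I_n) : seq 'I_n := rev w.

Definition is_premaniplex (n : nat) (F : Type) (adj : 'I_n -> F -> F) : Prop :=
  (forall (i : 'I_n) (x : F), adj i (adj i x) = x) /\
  (forall (i j : 'I_n) (x : F), far i j -> adj i (adj j (adj i (adj j x))) = x).

Definition act (n : nat) (F : Type) (adj : 'I_n -> F -> F) (w : seq 'I_n) (x : F) : F :=
  foldr (fun i z => adj i z) x w.

Definition connected (n : nat) (F : Type) (adj : 'I_n -> F -> F) : Prop :=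
  forall x y : F, exists w : seq 'I_n, act adj w x = y.

Definition is_aut (n : nat) (F : Type) (adj : 'I_n -> F -> F) (g : F -> F) : Prop :=
  bijective g /\ forall (i : 'I_n) (x : F), g (adj i x) = adj i (g x).

(* Since W_omega(y) is determined by (y, omega), the
   fundamental groupoid Pi(Y) is encoded by pairs (y, w) (the class of
   paths from y with colour product w, with w applied first its last
   letter).  A voltage assignment eta : Pi(Y) -> C^n is a function
   eta y w (a word of C^n), well defined on C^m-classes, satisfying
   eta(W1 W2) = eta(W2) eta(W1), i.e.
   eta y (w2 ++ w1) = eta (act w1 y) w2 * eta y w1.                     *)

Definition voltage_assignment (n m : nat) (Y : Type) (adjY : 'I_m -> Y -> Y)
    (eta : Y -> seq 'I_m -> seq 'I_n) : Prop :=
  (forall (y : Y) (w w' : seq 'I_m), coxeq w w' -> coxeq (eta y w) (eta y w')) /\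
  (forall (y : Y) (w1 w2 : seq 'I_m),
      coxeq (eta y (w2 ++ w1)) (eta (act adjY w1 y) w2 ++ eta y w1)).

(* Walks in a set of darts T (dart (y,i) goes from y to adj i y); the walk
   from y with colour sequence s (first step = head of s). *)
Fixpoint walk_in (m : nat) (Y : Type) (adjY : 'I_m -> Y -> Y)
    (T : Y -> 'I_m -> Prop) (y : Y) (s : seq 'I_m) : Prop :=
  match s with
  | [::] => True
  | i :: s' => T y i /\ walk_in adjY T (adjY i y) s'
  end.

Definition walk_end (m : nat) (Y : Type) (adjY : 'I_m -> Y -> Y) (y : Y)
    (s : seq 'I_m) : Y := foldl (fun z i => adjY i z) y s.

(* reduced = no immediate backtracking (never the same colour twice in a row) *)
Definition reduced (m : nat) (s : seq 'I_m) : bool := sorted (fun a b => a != b) s.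

Definition spanning_tree (m : nat) (Y : Type) (adjY : 'I_m -> Y -> Y)
    (T : Y -> 'I_m -> Prop) : Prop :=
  (forall (y : Y) (i : 'I_m), T y i -> T (adjY i y) i) /\
  (forall y y' : Y, exists! s : seq 'I_m,
      walk_in adjY T y s /\ reduced s /\ walk_end adjY y s = y').

Definition trivial_spanning_tree (n m : nat) (Y : Type) (adjY : 'I_m -> Y -> Y)
    (eta : Y -> seq 'I_m -> seq 'I_n) : Prop :=
  exists T : Y -> 'I_m -> Prop, spanning_tree adjY T /\
    forall (y : Y) (i : 'I_m), T y i -> coxeq (eta y [:: i]) [::].

Definition mix_adj (n m : nat) (X Y : Type) (adjX : 'I_n -> X -> X)
    (adjY : 'I_m -> Y -> Y) (eta : Y -> seq 'I_m -> seq 'I_n)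
    (i : 'I_m) (p : X * Y) : X * Y :=
  (act adjX (eta p.2 [:: i]) p.1, adjY i p.2).

Definition induced_by_aut (n : nat) (X Y : Type) (adjX : 'I_n -> X -> X)
    (gamma : X * Y -> X * Y) : Prop :=
  exists alpha : X -> X, is_aut adjX alpha /\
    forall (x : X) (y : Y), gamma (x, y) = (alpha x, y).

Definition all_auts_induced (n m : nat) (X Y : Type) (adjX : 'I_n -> X -> X)
    (adjY : 'I_m -> Y -> Y) (eta : Y -> seq 'I_m -> seq 'I_n) : Prop :=
  forall gamma : X * Y -> X * Y,
    is_aut (mix_adj adjX adjY eta) gamma -> induced_by_aut adjX gamma.

Definition preserves_connectivity (n m : nat) (Y : Type) (adjY : 'I_m -> Y -> Y)
    (eta : Y -> seq 'I_m -> seq 'I_n) : Prop :=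
  forall (X' : Type) (adjX' : 'I_n -> X' -> X'),
    is_premaniplex adjX' -> connected adjX' -> connected (mix_adj adjX' adjY eta).

Definition in_stab (n : nat) (F : Type) (adj : 'I_n -> F -> F) (x0 : F)
    (w : seq 'I_n) : Prop := act adj w x0 = x0.

Definition in_zeta_preim (n m : nat) (X Y : Type) (adjX : 'I_n -> X -> X) (x0 : X)
    (adjY : 'I_m -> Y -> Y) (y0 : Y) (eta : Y -> seq 'I_m -> seq 'I_n)
    (w : seq 'I_m) : Prop :=
  in_stab adjY y0 w /\ in_stab adjX x0 (eta y0 w).

Definition in_normalizer (m : nat) (K : seq 'I_m -> Prop) (g : seq 'I_m) : Prop :=
  forall k : seq 'I_m, K k <-> K (g ++ k ++ winv g).

(* Main.v *)
Require Import Defs.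
From mathcomp Require Import all_boot.
From Stdlib Require Import ProofIrrelevance FunctionalExtensionality PropExtensionality IndefiniteDescription.
Set Implicit Arguments. Unset Strict Implicit. Unset Printing Implicit Defensive.

Lemma cx_cat n (a b s t : seq 'I_n) : coxeq a b -> coxeq (s ++ a ++ t) (s ++ b ++ t).
Proof.
move=> H; elim: H s t => {a b}.
- by move=> w s t; apply: cx_refl.
- by move=> w w' _ IH s t; apply: cx_sym.
- by move=> w1 w2 w3 _ IH1 _ IH2 s t; apply: cx_trans (IH1 s t) (IH2 s t).
- move=> s0 t0 i s t; have := cx_inv (s ++ s0) (t0 ++ t) i.
  by rewrite -!catA /=.
- move=> s0 t0 i j Hf s t; have := cx_comm (s ++ s0) (t0 ++ t) Hf.
  by rewrite -!catA /=.
Qed.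

Lemma cx_catl n (a b s : seq 'I_n) : coxeq a b -> coxeq (s ++ a) (s ++ b).
Proof. by move=> H; have := cx_cat s [::] H; rewrite !cats0. Qed.
Lemma cx_catr n (a b t : seq 'I_n) : coxeq a b -> coxeq (a ++ t) (b ++ t).
Proof. by move=> H; have := cx_cat [::] t H. Qed.
Lemma cx_cat2 n (a b c d : seq 'I_n) : coxeq a b -> coxeq c d -> coxeq (a ++ c) (b ++ d).
Proof. by move=> H1 H2; apply: cx_trans (cx_catr _ H1) (cx_catl _ H2). Qed.

Lemma cx_revK n (a : seq 'I_n) : coxeq (rev a ++ a) [::].
Proof.
elim: a => [|i a IH] /=; first exact: cx_refl.
rewrite rev_cons cat_rcons; exact: cx_trans (cx_inv _ _ _) IH.
Qed.
Lemma cx_Krev n (a : seq 'I_n) : coxeq (a ++ rev a) [::].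
Proof. by have := cx_revK (rev a); rewrite revK. Qed.

Definition resp n F (adj : 'I_n -> F -> F) :=
  forall a b x, coxeq a b -> act adj a x = act adj b x.

Lemma act_cat n F (adj : 'I_n -> F -> F) s t x : act adj (s ++ t) x = act adj s (act adj t x).
Proof. by rewrite /act foldr_cat. Qed.

Lemma prem_resp n F (adj : 'I_n -> F -> F) : is_premaniplex adj -> resp adj.
Proof.
move=> [H1 H2] a b x H; elim: H x => {a b}.
- by [].
- by move=> w w' _ IH x; rewrite IH.
- by move=> w1 w2 w3 _ IH1 _ IH2 x; rewrite IH1 IH2.
- by move=> s t i x; rewrite !act_cat /= H1.
- move=> s t i j Hf x; rewrite !act_cat /=; congr (act adj s _).
  set z := act adj t x.
  have := H2 i j (adj j (adj i z)) Hf. by rewrite H1 H1.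
Qed.

Lemma resp_revK n F (adj : 'I_n -> F -> F) w x : resp adj -> act adj (rev w) (act adj w x) = x.
Proof. by move=> R; rewrite -act_cat (R _ [::]) //; apply: cx_revK. Qed.
Lemma resp_Krev n F (adj : 'I_n -> F -> F) w x : resp adj -> act adj w (act adj (rev w) x) = x.
Proof. by move=> R; rewrite -act_cat (R _ [::]) //; apply: cx_Krev. Qed.

Section Mix.
Variables (n m : nat) (X : Type) (adjX : 'I_n -> X -> X)
  (Y : Type) (adjY : 'I_m -> Y -> Y) (eta : Y -> seq 'I_m -> seq 'I_n).
Hypotheses (HX : is_premaniplex adjX) (HY : is_premaniplex adjY)
  (HV : voltage_assignment adjY eta).

Lemma eta_nil y : coxeq (eta y [::]) [::].
Proof.
set a := eta y [::].
have H : coxeq a (a ++ a) by exact: HV.2 y [::] [::].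
apply: cx_sym; apply: cx_trans (cx_sym (cx_revK a)) _.
apply: cx_trans (cx_catl (rev a) H) _; rewrite catA.
exact: (cx_catr a (cx_revK a)).
Qed.

Lemma actM w x y : act (mix_adj adjX adjY eta) w (x, y) =
  (act adjX (eta y w) x, act adjY w y).
Proof.
elim: w => [|i w IH] /=.
  by rewrite (prem_resp HX _ (eta_nil y)).
rewrite IH /mix_adj /=; congr pair.
rewrite -act_cat; apply: prem_resp => //; apply: cx_sym.
exact: HV.2 y w [:: i].
Qed.

Lemma mix_resp : resp (mix_adj adjX adjY eta).
Proof.
move=> a b [x y] H; rewrite !actM (prem_resp HY _ H).
by rewrite (prem_resp HX _ (HV.1 y a b H)).
Qed.

End Mix.

Section Univ.
Variable n : nat.
Definition UF := {P : seq 'I_n -> Prop | exists u, forall s, P s <-> coxeq s u}.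
Definition cl (u : seq 'I_n) : UF.
Proof. exists (fun s => coxeq s u); exists u; done. Defined.

Lemma sig_ext (P Q : UF) : (forall s, sval P s <-> sval Q s) -> P = Q.
Proof.
case: P Q => p Hp [q Hq] /= H.
have E : p = q by apply: functional_extensionality => s; apply: propositional_extensionality.
subst q; f_equal; apply: proof_irrelevance.
Qed.

Lemma cl_eq u v : coxeq u v -> cl u = cl v.
Proof.
move=> H; apply: sig_ext => s /=; split => H'.
  exact: cx_trans H' H.
exact: cx_trans H' (cx_sym H).
Qed.

Lemma cl_inj u v : cl u = cl v -> coxeq u v.
Proof. move=> E; have : sval (cl u) u by apply: cx_refl. by rewrite E. Qed.

Lemma cl_surj (P : UF) : exists u, P = cl u.
Proof.
case: (svalP P) => u Hu; exists u; apply: sig_ext => s /=; exact: Hu.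
Qed.

Lemma cx_shift (i : 'I_n) s u : coxeq (i :: s) u <-> coxeq s (i :: u).
Proof.
split=> H.
  apply: cx_trans (cx_sym (cx_inv [::] s i)) _.
  exact: (cx_catl [:: i] H).
apply: cx_trans (cx_catl [:: i] H) _.
exact: (cx_inv [::] u i).
Qed.

Definition uadj (i : 'I_n) (P : UF) : UF.
Proof.
exists (fun s => sval P (i :: s)).
case: (svalP P) => u Hu; exists (i :: u) => s.
rewrite Hu; exact: cx_shift.
Defined.

Lemma uadj_cl i u : uadj i (cl u) = cl (i :: u).
Proof. apply: sig_ext => s /=; exact: cx_shift. Qed.

Lemma uact_cl w u : act uadj w (cl u) = cl (w ++ u).
Proof. by elim: w => [|i w IH] //=; rewrite IH uadj_cl. Qed.

Lemma u_prem : is_premaniplex uadj.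
Proof.
split.
  move=> i P; case: (cl_surj P) => u ->; rewrite !uadj_cl; apply: cl_eq.
  exact: (cx_inv [::] u i).
move=> i j P Hf; case: (cl_surj P) => u ->; rewrite !uadj_cl; apply: cl_eq.
apply: cx_trans (cx_sym (cx_comm [:: i] [:: j & u] Hf)) _ => /=.
apply: cx_trans (cx_inv [::] [:: j, j & u] i) _ => /=.
exact: (cx_inv [::] u j).
Qed.

Lemma u_conn : connected uadj.
Proof.
move=> P Q; case: (cl_surj P) => u ->; case: (cl_surj Q) => v ->.
exists (v ++ rev u); rewrite uact_cl; apply: cl_eq; rewrite -catA.
by have := cx_catl v (cx_revK u); rewrite cats0.
Qed.
End Univ.

Section Main.
Variables (n m : nat) (X : Type) (adjX : 'I_n -> X -> X) (x0 : X)
  (Y : Type) (adjY : 'I_m -> Y -> Y) (y0 : Y) (eta : Y -> seq 'I_m -> seq 'I_n).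
Hypotheses (HX : is_premaniplex adjX) (HXc : connected adjX) (HY : is_premaniplex adjY)
  (HV : voltage_assignment adjY eta).
Local Notation Fm := (mix_adj adjX adjY eta).
Local Notation K := (in_zeta_preim adjX x0 adjY y0 eta).

Let RM : resp Fm := mix_resp HX HY HV.

Lemma actF_cat s t p : act Fm (s ++ t) p = act Fm s (act Fm t p).
Proof. exact: act_cat. Qed.

Lemma HK k : K k <-> act Fm k (x0, y0) = (x0, y0).
Proof.
rewrite (actM HX HV) /in_zeta_preim /in_stab; split.
  by case=> -> ->.
by case=> -> ->.
Qed.

Lemma Kresp a b : coxeq a b -> K a -> K b.
Proof. by move=> H /HK Ha; apply/HK; rewrite -(RM _ H). Qed.

Lemma gam_act (gam : X * Y -> X * Y) : is_aut Fm gam ->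
  forall a p, gam (act Fm a p) = act Fm a (gam p).
Proof.
move=> [_ Hc]; elim=> [|i a IH] p //=.
by rewrite Hc IH.
Qed.

Lemma dir1 : connected Fm -> all_auts_induced adjX adjY eta ->
  forall g, in_normalizer K g -> in_stab adjY y0 g.
Proof.
move=> Hc Hind g Hn.
have WD : forall h, (forall k, K k -> K (h ++ k ++ rev h)) -> forall a b,
    act Fm a (x0, y0) = act Fm b (x0, y0) ->
    act Fm (a ++ rev h) (x0, y0) = act Fm (b ++ rev h) (x0, y0).
  move=> h Kh a b E.
  have Kb : K (rev b ++ a).
    apply/HK. by rewrite actF_cat E resp_revK.
  have := proj1 (HK _) (Kh _ Kb); rewrite !actF_cat => E2.
  have E3 := f_equal (act Fm (rev h)) E2; rewrite resp_revK // in E3.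
  have E4 := f_equal (act Fm b) E3; rewrite resp_Krev // in E4.
have Kg : forall k, K k -> K (g ++ k ++ rev g) by move=> k /(Hn k).1.
have Krg : forall k, K k -> K (rev g ++ k ++ rev (rev g)).
  move=> k Kk; rewrite revK; apply/(Hn _).2.
  apply: Kresp Kk.
  have -> : g ++ (rev g ++ k ++ g) ++ rev g = (g ++ rev g) ++ k ++ (g ++ rev g)
    by rewrite !catA.
  apply: cx_sym.
  have := cx_cat2 (cx_Krev g) (cx_cat2 (cx_refl k) (cx_Krev g)).
  by rewrite /= cats0.
have wf : forall z, {w | act Fm w (x0, y0) = z} :=
  fun z => constructive_indefinite_description _ (Hc (x0, y0) z).
pose gam h z := act Fm (sval (wf z) ++ rev h) (x0, y0).
have gamE : forall h, (forall k, K k -> K (h ++ k ++ rev h)) ->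
    forall a, gam h (act Fm a (x0, y0)) = act Fm (a ++ rev h) (x0, y0).
  by move=> h Kh a; apply: WD => //; rewrite (svalP (wf _)).
have Haut : is_aut Fm (gam g).
  split.
    exists (gam (rev g)) => z; case: (wf z) => a <-.
      rewrite (gamE g Kg) (gamE (rev g) Krg) revK; apply: RM; rewrite -catA.
      by have := cx_catl a (cx_revK g); rewrite cats0.
    rewrite (gamE (rev g) Krg) (gamE g Kg) revK; apply: RM; rewrite -catA.
    by have := cx_catl a (cx_Krev g); rewrite cats0.
  move=> i z; case: (wf z) => a <-.
  change (Fm i (act Fm a (x0, y0))) with (act Fm (i :: a) (x0, y0)).
  by rewrite !(gamE g Kg).
have [alpha [_ Hal]] := Hind _ Haut.
have E := gamE g Kg [::]; rewrite /= Hal (actM HX HV) in E.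
case: E => _ E.
by rewrite /in_stab {1}E resp_Krev //; apply: prem_resp.
Qed.

Lemma dir2 : preserves_connectivity adjY eta ->
  (forall g, in_normalizer K g -> in_stab adjY y0 g) ->
  all_auts_induced adjX adjY eta.
Proof.
move=> Hpc Hnorm gam Haut.
have GA := gam_act Haut.
case: Haut => [[gi Hgi1 Hgi2] Hgc].
have Hc := Hpc X adjX HX HXc.
have [g0 Eg] := Hc (x0, y0) (gam (x0, y0)).
pose h := rev g0.
have Eh : gam (x0, y0) = act Fm (rev h) (x0, y0) by rewrite revK.
have Hn : in_normalizer K h.
  move=> k; rewrite !HK; split => E.
    by rewrite !actF_cat -Eh -GA E Eh resp_Krev.
  rewrite !actF_cat in E.
  have E' := f_equal (act Fm (rev h)) E; rewrite resp_revK // -Eh -GA in E'.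
  by have := f_equal gi E'; rewrite !Hgi1.
have Hh := Hnorm h Hn.
have Hrh : act adjY (rev h) y0 = y0.
  by rewrite -{1}Hh resp_revK //; apply: prem_resp.
pose alpha x := (gam (x, y0)).1.
have Hsnd : forall p, (gam p).2 = p.2.
  move=> p; have [a Ea] := Hc (x0, y0) p.
  by rewrite -Ea GA Eh -actF_cat !(actM HX HV) /= (act_cat adjY) Hrh.
have gx : forall x, gam (x, y0) = (alpha x, y0).
  move=> x; rewrite /alpha; case E: (gam (x, y0)) => [a b] /=.
  by have := Hsnd (x, y0); rewrite E /= => ->.
have Hu : forall v, exists w, act adjY w y0 = y0 /\ coxeq (eta y0 w) v.
  move=> v; have [w] := Hpc _ _ (@u_prem n) (@u_conn n) (cl [::], y0) (cl v, y0).
  rewrite (actM (@u_prem n) HV) uact_cl cats0.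
  move=> E; have E1 := f_equal (fun p => p.1) E; have H2 := f_equal (fun p => p.2) E; simpl in E1, H2; exists w; split; [exact: H2 | exact: (cl_inj E1)].
have comm : forall v x, alpha (act adjX v x) = act adjX v (alpha x).
  move=> v x; have [w [Hw Hv]] := Hu v.
  rewrite -!(prem_resp HX _ Hv).
  have := GA w (x, y0).
  rewrite (actM HX HV) Hw gx gx (actM HX HV) Hw.
  by case=> ->.
exists alpha; split.
  split.
    exists (fun x => (gi (x, y0)).1).
      by move=> x /=; rewrite -gx Hgi1.
    move=> x /=.
    have sx : gi (x, y0) = ((gi (x, y0)).1, y0).
      move: (Hsnd (gi (x, y0))); rewrite Hgi2 /=.
      by case: (gi (x, y0)) => a b /= ->.
    by rewrite /alpha -sx Hgi2.
  by move=> i x; exact: (comm [:: i] x).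
move=> x y; have [a Ea] := Hc (x0, y0) (x, y).
rewrite (actM HX HV) in Ea; case: Ea => <- <-.
by rewrite -(actM HX HV) GA gx (actM HX HV) comm.
Qed.
End Main.

Theorem proposition5p4 (n m : nat)
    (X : Type) (adjX : 'I_n -> X -> X) (x0 : X)
    (Y : Type) (adjY : 'I_m -> Y -> Y) (y0 : Y)
    (eta : Y -> seq 'I_m -> seq 'I_n) :
  is_premaniplex adjX -> connected adjX ->
  is_premaniplex adjY -> connected adjY ->
  voltage_assignment adjY eta ->
  trivial_spanning_tree adjY eta ->
  ((connected (mix_adj adjX adjY eta) /\ all_auts_induced adjX adjY eta) ->
     forall g : seq 'I_m,
       in_normalizer (in_zeta_preim adjX x0 adjY y0 eta) g -> in_stab adjY y0 g)
  /\
  ((preserves_connectivity adjY eta /\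
    (forall g : seq 'I_m,
       in_normalizer (in_zeta_preim adjX x0 adjY y0 eta) g -> in_stab adjY y0 g)) ->
     all_auts_induced adjX adjY eta).
Proof.
move=> HX HXc HY _ HV _; split.
  by case=> Hc Hind; exact: (dir1 HX HY HV Hc Hind).
by case=> Hpc Hn; exact: (@dir2 _ _ _ _ x0 _ _ y0 _ HX HXc HY HV Hpc Hn).
Qed.
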